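(* For every integer $N\ge16$ there is $C<\infty$ such that for every interval $I\subset[0,1]$ with $\widehat{\dot\sigma}(I)>0$, $$\widehat{\dot\sigma}(I)\,\mathsf E(I,\widehat{\dot\sigma})^2\,\mathrm P(I,\widehat\omega)^2\le C\,\widehat\omega(I).$$
   Context: $\mathrm P(I,\mu)=\int_{\mathbb R}\frac{|I|}{(|I|+\operatorname{dist}(x,I))^2}\,d\mu(x)$; for $\mu(I)>0$, $\mathsf E(I,\mu)^2=\frac12\,\frac{1}{\mu(I)^2}\int_I\int_I\frac{(x-x')^2}{|I|^2}\,d\mu(x)\,d\mu(x')$. Cantor intervals: fix an integer $N\ge16$. Set $I^0_1=[0,1]$. Each interval $I=[a,a+N^{-k}]$ of generation $k$ has two children of generation $k+1$: the left child $I_-=[a,a+N^{-k-1}]$ and the right child $I_+=[a+N^{-k}-N^{-k-1},a+N^{-k}]$. The $2^k$ intervals of generation $k$ are denoted $I^k_j$, $1\le j\le 2^k$, numbered left to right; $\mathcal D$ is the collection of all of them. $\dot z^k_j$ is the center of $I^k_j$. The Cantor set is $\mathsf E^{(N)}=\bigcap_{k}\bigcup_{j}I^k_j$. Redistributed Cantor measure: with $\eta=1/N$, $\widehat\omega$ is the unique Borel probability measure supported on $\mathsf E^{(N)}$ such that $\widehat\omega(I^1_1)=\widehat\omega(I^1_2)=\frac12$ and for every $I\in\mathcal D$ of generation $\ge1$: if $I$ is the left child of its parent then $\widehat\omega(I_-)=\frac{1+\eta}2\widehat\omega(I)$, $\widehat\omega(I_+)=\frac{1-\eta}2\widehat\omega(I)$;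 if $I$ is the right child of its parent then $\widehat\omega(I_-)=\frac{1-\eta}2\widehat\omega(I)$, $\widehat\omega(I_+)=\frac{1+\eta}2\widehat\omega(I)$. Weights: $\widehat s^k_j=N^{-2k}/\widehat\omega(I^k_j)$; $\widehat{\dot\sigma}=\sum_{k\ge0}\sum_{j=1}^{2^k}\widehat s^k_j\,\delta_{\dot z^k_j}$. *)

(* Defs.v *)
From Stdlib Require Import Reals Lra Lia.
Open Scope R_scope.

Fixpoint sumR (n : nat) (f : nat -> R) : R :=
  match n with
  | O => 0
  | S m => sumR m f + f m
  end.

(* Cantor intervals, 0-indexed: I^k_j for j < 2^k, left endpoint cl N k j,
   length N^{-k}.  Children of (k,j) are (k+1,2j) (left) and (k+1,2j+1) (right). *)
Fixpoint cl (N : nat) (k j : nat) : R :=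
  match k with
  | O => 0
  | S k' => cl N k' (Nat.div2 j)
            + (if Nat.odd j then / INR N ^ k' - / INR N ^ (S k') else 0)
  end.

Definition clen (N k : nat) : R := / INR N ^ k.

Definition ccenter (N k j : nat) : R := cl N k j + clen N k / 2.

(* masses \widehat\omega(I^k_j) of the redistributed Cantor measure, eta = 1/N *)
Fixpoint omega_cyl (N : nat) (k j : nat) : R :=
  match k with
  | O => 1
  | S O => / 2
  | S ((S _) as k') =>
      omega_cyl N k' (Nat.div2 j) *
      (if Bool.eqb (Nat.odd j) (Nat.odd (Nat.div2 j))
       then (1 + / INR N) / 2 else (1 - / INR N) / 2)
  end.

Definition s_weight (N k j : nat) : R := / INR N ^ (2 * k) / omega_cyl N k j.

(* interval I with endpoints a < b; la / lb say whether a / b belong to I *)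
Definition inIb (a b : R) (la lb : bool) (x : R) : bool :=
  (if la then (if Rle_dec a x then true else false)
         else (if Rlt_dec a x then true else false)) &&
  (if lb then (if Rle_dec x b then true else false)
         else (if Rlt_dec x b then true else false)).

Definition indI (a b : R) (la lb : bool) (x : R) : R :=
  if inIb a b la lb x then 1 else 0.

Definition distI (a b x : R) : R := Rmax (Rmax (a - x) (x - b)) 0.

(* partial sums (generations < K) of \widehat{\dot\sigma}(I) *)
Definition sigma_partial (N : nat) (a b : R) (la lb : bool) (K : nat) : R :=
  sumR K (fun k => sumR (2 ^ k) (fun j =>
    s_weight N k j * indI a b la lb (ccenter N k j))).

(* partial sums of  \int_I\int_I (x-x')^2 d\sigma(x) d\sigma(x') *)
Definition dbl_partial (N : nat) (a b : R) (la lb : bool) (K : nat) : R :=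
  sumR K (fun k => sumR (2 ^ k) (fun j =>
  sumR K (fun k' => sumR (2 ^ k') (fun j' =>
    s_weight N k j * indI a b la lb (ccenter N k j) *
    (s_weight N k' j' * indI a b la lb (ccenter N k' j')) *
    (ccenter N k j - ccenter N k' j') ^ 2)))).

(* generation-k discrete approximation of \widehat\omega :
   \omega_k = \sum_j \widehat\omega(I^k_j) \delta_{\dot z^k_j}  (converges weakly to \widehat\omega) *)
Definition omega_approx (N : nat) (a b : R) (la lb : bool) (k : nat) : R :=
  sumR (2 ^ k) (fun j => omega_cyl N k j * indI a b la lb (ccenter N k j)).

Definition poisson_approx (N : nat) (a b : R) (k : nat) : R :=
  sumR (2 ^ k) (fun j => omega_cyl N k j *
     ((b - a) / ((b - a) + distI a b (ccenter N k j)) ^ 2)).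

(* Main.v *)
Require Import Defs.
From Stdlib Require Import Reals Lra Lia Arith Classical.
Open Scope R_scope.

Lemma sumR_ext n f g : (forall i, (i < n)%nat -> f i = g i) -> sumR n f = sumR n g.
Proof. induction n; simpl; intros H; [reflexivity|].
  rewrite IHn by (intros; apply H; lia). rewrite H by lia. reflexivity. Qed.
Lemma sumR_le n f g : (forall i, (i < n)%nat -> f i <= g i) -> sumR n f <= sumR n g.
Proof. induction n; simpl; intros H; [lra|].
  pose proof (IHn ltac:(intros; apply H; lia)). pose proof (H n ltac:(lia)). lra. Qed.
Lemma sumR_nonneg n f : (forall i, (i < n)%nat -> 0 <= f i) -> 0 <= sumR n f.
Proof. intros H. replace 0 with (sumR n (fun _ => 0)). apply sumR_le; auto.
  clear H; induction n; simpl; [reflexivity| rewrite IHn; ring]. Qed.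
Lemma sumR_zero n f : (forall i, (i < n)%nat -> f i = 0) -> sumR n f = 0.
Proof. induction n; simpl; intros H; [reflexivity|].
  rewrite IHn by (intros; apply H; lia). rewrite H by lia. ring. Qed.
Lemma sumR_plus n f g : sumR n (fun i => f i + g i) = sumR n f + sumR n g.
Proof. induction n; simpl; [ring| rewrite IHn; ring]. Qed.
Lemma sumR_scal n c f : sumR n (fun i => c * f i) = c * sumR n f.
Proof. induction n; simpl; [ring| rewrite IHn; ring]. Qed.
Lemma sumR_swap n m f : sumR n (fun i => sumR m (fun l => f i l)) = sumR m (fun l => sumR n (fun i => f i l)).
Proof. induction n; simpl.
  - symmetry; apply sumR_zero; reflexivity.
  - rewrite IHn, <- sumR_plus. reflexivity. Qed.
Lemma sumR_pair n f : sumR (2*n) f = sumR n (fun i => f (2*i)%nat + f (2*i+1)%nat).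
Proof. induction n; [reflexivity|].
  replace (2 * S n)%nat with (S (S (2*n)))%nat by lia. cbn [sumR]. rewrite IHn.
  cbn [sumR]. replace (S (2*n)) with (2*n+1)%nat by lia. ring. Qed.
Lemma sumR_ge_term n f i : (forall i, (i < n)%nat -> 0 <= f i) -> (i < n)%nat -> f i <= sumR n f.
Proof. induction n; simpl; intros H Hi; [lia|].
  destruct (Nat.eq_dec i n) as [->|Hne].
  - pose proof (sumR_nonneg n f ltac:(intros; apply H; lia)). lra.
  - pose proof (IHn ltac:(intros; apply H; lia) ltac:(lia)). pose proof (H n ltac:(lia)). lra. Qed.
Lemma sumR_single n f A : (A < n)%nat -> sumR n (fun i => (if Nat.eq_dec i A then 1 else 0) * f i) = f A.
Proof. induction n; simpl; intros HA; [lia|].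
  destruct (Nat.eq_dec n A) as [->|Hne].
  - rewrite sumR_zero. ring. intros i Hi. destruct (Nat.eq_dec i A); [lia|ring].
  - rewrite IHn by lia. ring. Qed.

Lemma lim_le u l M : Un_cv u l -> (forall n, u n <= M) -> l <= M.
Proof. intros Hu H. destruct (Rle_dec l M) as [|Hn]; auto. exfalso.
  destruct (Hu (l - M)) as [n0 Hn0]; [lra|]. specialize (Hn0 n0 (le_n _)). specialize (H n0).
  unfold R_dist in Hn0. apply Rabs_def2 in Hn0. lra. Qed.
Lemma lim_ge u l M n0 : Un_cv u l -> (forall n, (n >= n0)%nat -> M <= u n) -> M <= l.
Proof. intros Hu H. destruct (Rle_dec M l) as [|Hn]; auto. exfalso.
  destruct (Hu (M - l)) as [n1 Hn1]; [lra|]. specialize (Hn1 (max n0 n1) ltac:(lia)).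
  specialize (H (max n0 n1) ltac:(lia)).
  unfold R_dist in Hn1. apply Rabs_def2 in Hn1. lra. Qed.

Lemma least_nat (P : nat -> Prop) n : P n -> exists m, P m /\ forall k, (k < m)%nat -> ~ P k.
Proof. induction n as [n IH] using lt_wf_ind. intros Hn.
  destruct (classic (exists k, (k < n)%nat /\ P k)) as [[k [Hk Pk]]|Hno].
  - exact (IH k Hk Pk).
  - exists n; split; auto. intros k Hk Pk. apply Hno; eauto. Qed.

Lemma div2_2 i : ((2*i)/2 = i)%nat.
Proof. symmetry. apply (Nat.div_unique _ _ _ 0); lia. Qed.
Lemma div2_2S i : ((2*i+1)/2 = i)%nat.
Proof. symmetry. apply (Nat.div_unique _ _ _ 1); lia. Qed.
Lemma div_pow_S j m : (j / 2 ^ S m = (j / 2) / 2 ^ m)%nat.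
Proof. rewrite Nat.Div0.div_div. f_equal. Qed.
Lemma div_pow_add j m n : (j / 2 ^ (m + n) = (j / 2 ^ m) / 2 ^ n)%nat.
Proof. rewrite Nat.Div0.div_div, Nat.pow_add_r. reflexivity. Qed.
Lemma pow2_pos m : (2 ^ m <> 0)%nat.
Proof. apply Nat.pow_nonzero; lia. Qed.
Lemma div_lt_pow j m l : (j < 2 ^ (m + l))%nat -> (j / 2 ^ m < 2 ^ l)%nat.
Proof. intros H. apply Nat.Div0.div_lt_upper_bound. rewrite <- Nat.pow_add_r. exact H. Qed.

Definition q (N k : nat) : R := / INR N ^ k.

Lemma HNR N : (16 <= N)%nat -> 16 <= INR N.
Proof. intros H. apply le_INR in H. simpl in H. lra. Qed.
Lemma q_pos N k : (16 <= N)%nat -> 0 < q N k.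
Proof. intros H. pose proof (HNR N H). unfold q. apply Rinv_0_lt_compat, pow_lt. lra. Qed.
Lemma q_S N k : (16 <= N)%nat -> q N (S k) = q N k / INR N.
Proof. intros H. pose proof (HNR N H). unfold q. simpl. rewrite Rinv_mult. unfold Rdiv. ring. Qed.
Lemma q_pow N k : (16 <= N)%nat -> INR N ^ k * q N k = 1.
Proof. intros H. pose proof (HNR N H). unfold q. apply Rinv_r. apply pow_nonzero. lra. Qed.
Lemma q_S_le N k : (16 <= N)%nat -> q N (S k) <= q N k / 16.
Proof. intros H. pose proof (HNR N H). pose proof (q_pos N k H). rewrite q_S by auto.
  unfold Rdiv. apply Rmult_le_compat_l; [lra|]. apply Rinv_le_contravar; lra. Qed.

Lemma om_pos N k j : (16 <= N)%nat -> 0 < omega_cyl N k j.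
Proof. intros H. pose proof (HNR N H). assert (0 < / INR N < 1).
  { split. apply Rinv_0_lt_compat; lra. rewrite <- Rinv_1. apply Rinv_lt_contravar; lra. }
  revert j. induction k as [|k IH]; intros j; [simpl; lra|].
  destruct k as [|k]; [simpl; lra|].
  change (omega_cyl N (S (S k)) j) with (omega_cyl N (S k) (Nat.div2 j) *
      (if Bool.eqb (Nat.odd j) (Nat.odd (Nat.div2 j))
       then (1 + / INR N) / 2 else (1 - / INR N) / 2)).
  apply Rmult_lt_0_compat; [apply IH|]. destruct Bool.eqb; lra. Qed.

Lemma om_children N k i : omega_cyl N (S k) (2*i) + omega_cyl N (S k) (2*i+1) = omega_cyl N k i.
Proof. destruct k as [|k]; [simpl; lra|].
  change (omega_cyl N (S (S k)) (2*i)) with (omega_cyl N (S k) (Nat.div2 (2*i)) *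
      (if Bool.eqb (Nat.odd (2*i)) (Nat.odd (Nat.div2 (2*i)))
       then (1 + / INR N) / 2 else (1 - / INR N) / 2)).
  change (omega_cyl N (S (S k)) (2*i+1)) with (omega_cyl N (S k) (Nat.div2 (2*i+1)) *
      (if Bool.eqb (Nat.odd (2*i+1)) (Nat.odd (Nat.div2 (2*i+1)))
       then (1 + / INR N) / 2 else (1 - / INR N) / 2)).
  rewrite Nat.odd_even, Nat.odd_odd, Nat.div2_double.
  replace (2*i+1)%nat with (S (2*i)) by lia. rewrite Nat.div2_succ_double.
  set (w := omega_cyl N (S k) i). set (x := / INR N). destruct (Nat.odd i); cbn [Bool.eqb]; field. Qed.

Lemma om_child_ge N k j : (16 <= N)%nat -> 15/32 * omega_cyl N k (j/2) <= omega_cyl N (S k) j.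
Proof. intros H. pose proof (HNR N H). assert (/ INR N <= / 16) by (apply Rinv_le_contravar; lra).
  destruct k as [|k]; [simpl; lra|].
  change (omega_cyl N (S (S k)) j) with (omega_cyl N (S k) (Nat.div2 j) *
      (if Bool.eqb (Nat.odd j) (Nat.odd (Nat.div2 j))
       then (1 + / INR N) / 2 else (1 - / INR N) / 2)).
  rewrite Nat.div2_div. pose proof (om_pos N (S k) (j/2) H).
  assert (0 < / INR N) by (apply Rinv_0_lt_compat; lra).
  destruct Bool.eqb; nra. Qed.

Lemma om_anc N l d j : (16 <= N)%nat -> (15/32)^d * omega_cyl N l (j / 2^d) <= omega_cyl N (l+d) j.
Proof. intros H. revert j. induction d as [|d IH]; intros j.
  - rewrite Nat.add_0_r, Nat.pow_0_r, Nat.div_1_r. simpl. lra.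
  - rewrite Nat.add_succ_r, div_pow_S. pose proof (IH (j/2)%nat). pose proof (om_child_ge N (l+d) j H).
    simpl. rewrite Rmult_assoc. eapply Rle_trans; [apply Rmult_le_compat_l; [lra|exact H0]|exact H1]. Qed.

Lemma ratio_desc N l d j : (16 <= N)%nat ->
  q N (l+d) / omega_cyl N (l+d) j <= (32/15 / INR N)^d * (q N l / omega_cyl N l (j / 2^d)).
Proof. intros H. pose proof (HNR N H). revert j. induction d as [|d IH]; intros j.
  - rewrite Nat.add_0_r, Nat.pow_0_r, Nat.div_1_r. simpl. lra.
  - rewrite Nat.add_succ_r, div_pow_S. specialize (IH (j/2)%nat).
    pose proof (om_child_ge N (l+d) j H). pose proof (om_pos N (l+d) (j/2) H).
    pose proof (om_pos N (S (l+d)) j H). pose proof (q_pos N (l+d) H).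
    rewrite q_S by auto.
    apply Rle_trans with ((32/15/INR N) * (q N (l+d) / omega_cyl N (l + d) (j / 2))).
    + unfold Rdiv. rewrite !Rmult_assoc. 
      apply Rle_trans with (q N (l+d) * (/ INR N * / (15/32 * omega_cyl N (l + d) (j / 2)))).
      * apply Rmult_le_compat_l; [lra|]. apply Rmult_le_compat_l; [left; apply Rinv_0_lt_compat; lra|].
        apply Rinv_le_contravar; nra.
      * right. field. split; lra.
    + simpl. rewrite (Rmult_assoc (32/15/INR N)). apply Rmult_le_compat_l.
      * apply Rmult_le_pos; [lra| left; apply Rinv_0_lt_compat; lra].
      * exact IH. Qed.

Lemma cl_S N l p : cl N (S l) p = cl N l (p/2) + (if Nat.odd p then q N l - q N (S l) else 0).
Proof. simpl. rewrite Nat.div2_div. reflexivity. Qed.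

Definition incyl N k i x := cl N k i <= x <= cl N k i + q N k.

Lemma incyl_up N l m j x : (16 <= N)%nat -> incyl N (l+m) j x -> incyl N l (j / 2^m) x.
Proof. intros H. revert j. induction m as [|m IH]; intros j.
  - rewrite Nat.add_0_r, Nat.pow_0_r, Nat.div_1_r. auto.
  - rewrite Nat.add_succ_r, div_pow_S. intros [H1 H2]. apply IH.
    rewrite cl_S in H1, H2. pose proof (q_S_le N (l+m) H). pose proof (q_pos N (S (l+m)) H).
    unfold incyl. destruct (Nat.odd j); lra. Qed.

Lemma center_in N k i : (16 <= N)%nat -> incyl N k i (ccenter N k i).
Proof. intros H. pose proof (q_pos N k H). unfold incyl, ccenter, clen. fold (q N k). lra. Qed.

Lemma child_side N l p x : (16 <= N)%nat -> incyl N (S l) p x ->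
  if Nat.odd p then ccenter N l (p/2) + 7/16 * q N l <= x
  else x <= ccenter N l (p/2) - 7/16 * q N l.
Proof. intros H [H1 H2]. rewrite cl_S in H1, H2. pose proof (q_S_le N l H). pose proof (q_pos N (S l) H).
  unfold ccenter, clen. fold (q N l). destruct (Nat.odd p); lra. Qed.

Lemma inIb_bounds a b la lb x : inIb a b la lb x = true -> a <= x <= b.
Proof. unfold inIb. destruct la, lb;
  repeat match goal with |- context [Rle_dec ?u ?v] => destruct (Rle_dec u v)
                       | |- context [Rlt_dec ?u ?v] => destruct (Rlt_dec u v) end;
  simpl; intros; try discriminate; lra. Qed.

Lemma inIb_convex a b la lb x y z : inIb a b la lb x = true -> inIb a b la lb y = true ->
  x <= z <= y -> inIb a b la lb z = true.
Proof. unfold inIb. destruct la, lb;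
  repeat match goal with |- context [Rle_dec ?u ?v] => destruct (Rle_dec u v)
                       | |- context [Rlt_dec ?u ?v] => destruct (Rlt_dec u v) end;
  simpl; intros; try discriminate; try reflexivity; lra. Qed.

Lemma indI_01 a b la lb x : indI a b la lb x = 0 \/ indI a b la lb x = 1.
Proof. unfold indI. destruct inIb; auto. Qed.
Lemma indI_nonneg a b la lb x : 0 <= indI a b la lb x.
Proof. unfold indI. destruct inIb; lra. Qed.

Lemma odd_sib p p0 : (p / 2 = p0 / 2)%nat -> p <> p0 -> Nat.odd p0 = negb (Nat.odd p).
Proof. intros H1 H2. pose proof (Nat.div2_odd p). pose proof (Nat.div2_odd p0).
  rewrite Nat.div2_div in *. destruct (Nat.odd p), (Nat.odd p0); simpl in *; auto; lia. Qed.

Lemma sep N k i j0 x y : (16 <= N)%nat -> (i < 2^k)%nat -> (j0 < 2^k)%nat -> i <> j0 ->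
  incyl N k i x -> incyl N k j0 y ->
  exists l, (l < k)%nat /\ (i / 2^(k-l) = j0 / 2^(k-l))%nat /\ (j0/2^(k-l) < 2^l)%nat /\
   ((x <= ccenter N l (j0/2^(k-l)) - 7/16*q N l /\ ccenter N l (j0/2^(k-l)) + 7/16*q N l <= y) \/
    (y <= ccenter N l (j0/2^(k-l)) - 7/16*q N l /\ ccenter N l (j0/2^(k-l)) + 7/16*q N l <= x)).
Proof.
  intros HN Hi Hj Hne Hx Hy.
  destruct (least_nat (fun m => i / 2^m = j0 / 2^m)%nat k) as [m [Hm Hmin]].
  { rewrite !Nat.div_small; auto. }
  assert (Hmk : (m <= k)%nat).
  { destruct (le_lt_dec m k); auto. exfalso. apply (Hmin k l). rewrite !Nat.div_small; auto. }
  destruct m as [|m']. { rewrite !Nat.pow_0_r, !Nat.div_1_r in Hm. contradiction. }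
  destruct (Nat.le_exists_sub (S m') k Hmk) as [l [Hk _]]. subst k.
  exists l. replace (l + S m' - l)%nat with (S m') by lia.
  split; [lia|]. split; [exact Hm|]. split.
  { apply div_lt_pow. replace (S m' + l)%nat with (l + S m')%nat by lia. exact Hj. }
  replace (l + S m')%nat with (S l + m')%nat in Hx, Hy by lia.
  apply incyl_up in Hx; auto. apply incyl_up in Hy; auto.
  apply child_side in Hx; auto. apply child_side in Hy; auto.
  assert (E1 : (i / 2 ^ S m' = (i / 2^m') / 2)%nat).
  { replace (S m') with (m' + 1)%nat by lia. rewrite div_pow_add. reflexivity. }
  assert (E2 : (j0 / 2 ^ S m' = (j0 / 2^m') / 2)%nat).
  { replace (S m') with (m' + 1)%nat by lia. rewrite div_pow_add. reflexivity. }
  assert (Hp : (i / 2^m' <> j0 / 2^m')%nat) by (apply Hmin; lia).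
  assert (Hpp : ((i/2^m')/2 = (j0/2^m')/2)%nat) by (rewrite <- E1, <- E2; exact Hm).
  pose proof (odd_sib _ _ Hpp Hp) as Hodd.
  rewrite <- Hpp, <- E1 in Hy. rewrite <- E1 in Hx. rewrite Hm in Hx, Hy.
  rewrite Hodd in Hy. destruct (Nat.odd (i/2^m')); simpl in *; lra.
Qed.

Lemma kernel_bound a b x z d : a < b -> a <= z <= b -> 0 < d -> d <= Rabs (x - z) ->
  (b - a) / ((b - a) + distI a b x) ^ 2 <= / d.
Proof. intros Hab Hz Hd Hdx. unfold distI.
  set (L := b - a). set (D := Rmax (Rmax (a - x) (x - b)) 0).
  assert (HD0 : 0 <= D) by apply Rmax_r.
  assert (HDx : Rabs (x - z) - L <= D).
  { unfold D, L. apply Rle_trans with (Rmax (a - x) (x - b)); [|apply Rmax_l].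
    destruct (Rle_dec z x).
    - rewrite Rabs_right by lra. apply Rle_trans with (x - b); [lra|apply Rmax_r].
    - rewrite Rabs_left by lra. apply Rle_trans with (a - x); [lra|apply Rmax_l]. }
  assert (HL : 0 < L) by (unfold L; lra).
  destruct (Rle_dec L d).
  - apply Rle_trans with (L / d^2).
    + unfold Rdiv. apply Rmult_le_compat_l; [lra|]. apply Rinv_le_contravar; [nra|].
      apply pow_incr. lra.
    + unfold Rdiv. apply Rle_trans with (d * / d ^2). apply Rmult_le_compat_r; [|lra].
      left; apply Rinv_0_lt_compat; nra. right. field. lra.
  - apply Rle_trans with (L / L^2).
    + unfold Rdiv. apply Rmult_le_compat_l; [lra|]. apply Rinv_le_contravar; [nra|].
      apply pow_incr. lra.
    + replace (L / L^2) with (/ L) by (field; lra). left. apply Rinv_lt_contravar; nra.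
Qed.

Lemma regroup N l m h :
  sumR (2^(l+m)) (fun j => h (j / 2^m)%nat * omega_cyl N (l+m) j) =
  sumR (2^l) (fun i => h i * omega_cyl N l i).
Proof. induction m as [|m IH].
  - rewrite Nat.add_0_r. apply sumR_ext. intros. rewrite Nat.pow_0_r, Nat.div_1_r. reflexivity.
  - rewrite Nat.add_succ_r, Nat.pow_succ_r', sumR_pair. rewrite <- IH.
    apply sumR_ext. intros i _. rewrite !div_pow_S, div2_2, div2_2S.
    rewrite <- (om_children N (l+m) i). ring. Qed.

Lemma pois_term N k j0 K j : (16 <= N)%nat -> (j0 < 2^k)%nat -> (k < K)%nat -> (j < 2^K)%nat ->
  exists l, (l <= k)%nat /\ (j / 2^(K-l) = j0 / 2^(k-l))%nat /\
    7/16 * q N l <= Rabs (ccenter N K j - ccenter N k j0).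
Proof.
  intros HN Hj0 HkK Hj.
  set (x := ccenter N K j). assert (Hx : incyl N K j x) by (apply center_in; auto).
  assert (Hi : (j / 2^(K-k) < 2^k)%nat).
  { apply div_lt_pow. replace (K - k + k)%nat with K by lia. exact Hj. }
  assert (Hxk : incyl N k (j / 2^(K-k)) x).
  { apply incyl_up; auto. replace (k + (K-k))%nat with K by lia. exact Hx. }
  destruct (Nat.eq_dec (j / 2^(K-k)) j0) as [Heq|Hne].
  - exists k. split; [lia|]. rewrite Nat.sub_diag, Nat.pow_0_r, Nat.div_1_r. split; [exact Heq|].
    assert (Hx1 : incyl N (S k) (j / 2^(K - S k)) x).
    { apply incyl_up; auto. replace (S k + (K - S k))%nat with K by lia. exact Hx. }
    apply child_side in Hx1; auto.
    assert (E : ((j / 2^(K - S k)) / 2 = j0)%nat).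
    { rewrite <- Heq. replace (K - k)%nat with ((K - S k) + 1)%nat by lia.
      rewrite div_pow_add. reflexivity. }
    rewrite E in Hx1. pose proof (q_pos N k HN).
    destruct (Nat.odd _).
    + rewrite Rabs_right; lra.
    + rewrite Rabs_left; lra.
  - destruct (sep N k (j / 2^(K-k)) j0 x (ccenter N k j0) HN Hi Hj0 Hne Hxk (center_in N k j0 HN))
      as [l [Hlk [Hag [HA Hsd]]]].
    exists l. split; [lia|]. split.
    + replace (K - l)%nat with ((K - k) + (k - l))%nat by lia. rewrite div_pow_add. exact Hag.
    + pose proof (q_pos N l HN). destruct Hsd as [[H1 H2]|[H1 H2]].
      * rewrite Rabs_left; lra.
      * rewrite Rabs_right; lra.
Qed.

Lemma geom2 N k : (16 <= N)%nat -> sumR (S k) (fun l => INR N ^ l * (32/15)^(k-l)) <= 2 * INR N ^ k.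
Proof. intros HN. pose proof (HNR N HN). induction k as [|k IH].
  - simpl. lra.
  - change (sumR (S (S k)) (fun l => INR N ^ l * (32/15)^(S k - l)))
      with (sumR (S k) (fun l => INR N ^ l * (32/15)^(S k - l)) + INR N ^ (S k) * (32/15)^(S k - S k)).
    rewrite (sumR_ext (S k) _ (fun l => 32/15 * (INR N ^ l * (32/15)^(k-l)))).
    + rewrite sumR_scal, Nat.sub_diag, pow_O. change (INR N ^ S k) with (INR N * INR N ^ k).
      pose proof (pow_lt (INR N) k ltac:(lra)).
      assert (0 <= (INR N - 16) * INR N ^ k) by (apply Rmult_le_pos; lra). nra.
    + intros l Hl. replace (S k - l)%nat with (S (k - l)) by lia. simpl. ring.
Qed.

Lemma pois_bound N a b la lb k j0 K : (16 <= N)%nat -> a < b -> (j0 < 2^k)%nat ->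
  inIb a b la lb (ccenter N k j0) = true -> (k < K)%nat ->
  poisson_approx N a b K <= 8 * INR N ^ k * omega_cyl N k j0.
Proof.
  intros HN Hab Hj0 Hin HkK. pose proof (HNR N HN).
  apply inIb_bounds in Hin.
  set (ind := fun l j => if Nat.eq_dec (j / 2^(K-l)) (j0 / 2^(k-l)) then 1 else 0).
  unfold poisson_approx.
  apply Rle_trans with (sumR (2^K) (fun j => sumR (S k) (fun l =>
     (4 * INR N ^ l) * (ind l j * omega_cyl N K j)))).
  { apply sumR_le. intros j Hj.
    destruct (pois_term N k j0 K j HN Hj0 HkK Hj) as [l [Hl [Hag Hd]]].
    pose proof (q_pos N l HN). pose proof (om_pos N K j HN).
    apply Rle_trans with (omega_cyl N K j * (4 * INR N ^ l)).
    - apply Rmult_le_compat_l; [lra|].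
      eapply Rle_trans; [apply (kernel_bound a b _ (ccenter N k j0) (7/16 * q N l)); auto; lra|].
      pose proof (q_pow N l HN).
      replace (/ (7/16 * q N l)) with (16/7 * INR N ^ l).
      2:{ rewrite Rinv_mult. unfold q at 1. rewrite Rinv_inv. field. }
      pose proof (pow_lt (INR N) l ltac:(lra)). lra.
    - eapply Rle_trans; [|apply (sumR_ge_term (S k) _ l)].
      + unfold ind. destruct Nat.eq_dec; [|contradiction]. lra.
      + intros l' _. apply Rmult_le_pos. pose proof (pow_lt (INR N) l' ltac:(lra)). lra.
        apply Rmult_le_pos; [unfold ind; destruct Nat.eq_dec; lra|lra].
      + lia. }
  rewrite sumR_swap.
  apply Rle_trans with (sumR (S k) (fun l => (4 * INR N ^ l) * ((32/15)^(k-l) * omega_cyl N k j0))).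
  { apply sumR_le. intros l Hl. rewrite sumR_scal.
    pose proof (pow_lt (INR N) l ltac:(lra)).
    apply Rmult_le_compat_l; [lra|].
    pose proof (regroup N l (K - l) (fun i => if Nat.eq_dec i (j0 / 2^(k-l)) then 1 else 0)) as R.
    replace (l + (K - l))%nat with K in R by lia.
    simpl in R. unfold ind. rewrite R. rewrite sumR_single.
    2:{ apply div_lt_pow. replace (k - l + l)%nat with k by lia. exact Hj0. }
    pose proof (om_anc N l (k-l) j0 HN). replace (l + (k - l))%nat with k in H1 by lia.
    assert (0 < (15/32)^(k-l)) by (apply pow_lt; lra).
    assert ((32/15)^(k-l) * (15/32)^(k-l) = 1).
    { rewrite <- Rpow_mult_distr. replace (32/15*(15/32)) with 1 by field. apply pow1. }
    pose proof (om_pos N l (j0 / 2^(k-l)) HN).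
    assert (0 < (32/15)^(k-l)) by (apply pow_lt; lra).
    apply Rle_trans with ((32/15)^(k-l) * ((15/32)^(k-l) * omega_cyl N l (j0 / 2^(k-l)))).
    { right. rewrite <- Rmult_assoc, H3. ring. }
    apply Rmult_le_compat_l; lra. }
  rewrite (sumR_ext _ _ (fun l => (4 * omega_cyl N k j0) * (INR N ^ l * (32/15)^(k-l)))).
  2:{ intros; ring. }
  rewrite sumR_scal. pose proof (geom2 N k HN). pose proof (om_pos N k j0 HN). nra.
Qed.

Definition minatom N a b la lb k j0 := (j0 < 2^k)%nat /\ inIb a b la lb (ccenter N k j0) = true /\
  (forall g j, (g < k)%nat -> (j < 2^g)%nat -> inIb a b la lb (ccenter N g j) = false).

Lemma desc N a b la lb k j0 g j : (16 <= N)%nat -> minatom N a b la lb k j0 ->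
  (j < 2^g)%nat -> inIb a b la lb (ccenter N g j) = true ->
  (k <= g)%nat /\ (j / 2^(g-k) = j0)%nat.
Proof.
  intros HN [Hj0 [Hin0 Hmin]] Hj Hin.
  assert (Hkg : (k <= g)%nat).
  { destruct (le_lt_dec k g); auto. rewrite Hmin in Hin; auto; discriminate. }
  split; auto.
  set (x := ccenter N g j).
  assert (Hi : (j / 2^(g-k) < 2^k)%nat).
  { apply div_lt_pow. replace (g - k + k)%nat with g by lia. exact Hj. }
  assert (Hxk : incyl N k (j / 2^(g-k)) x).
  { apply incyl_up; auto. replace (k + (g-k))%nat with g by lia. apply center_in; auto. }
  destruct (Nat.eq_dec (j / 2^(g-k)) j0) as [|Hne]; auto. exfalso.
  destruct (sep N k _ j0 x (ccenter N k j0) HN Hi Hj0 Hne Hxk (center_in N k j0 HN))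
      as [l [Hlk [Hag [HA Hsd]]]].
  pose proof (q_pos N l HN).
  assert (inIb a b la lb (ccenter N l (j0 / 2^(k-l))) = true).
  { destruct Hsd as [[H1 H2]|[H1 H2]].
    - apply (inIb_convex _ _ _ _ x (ccenter N k j0)); auto. lra.
    - apply (inIb_convex _ _ _ _ (ccenter N k j0) x); auto. lra. }
  rewrite Hmin in H0; auto. discriminate.
Qed.

Definition I2 N a b la lb g j := indI a b la lb (cl N g j) * indI a b la lb (cl N g j + q N g).

Definition Xg N a b la lb g := sumR (2^(S g)) (fun j => I2 N a b la lb (S g) j * omega_cyl N (S g) j).

Lemma I2_01 N a b la lb g j : I2 N a b la lb g j = 0 \/
  (I2 N a b la lb g j = 1 /\ inIb a b la lb (cl N g j) = true /\ inIb a b la lb (cl N g j + q N g) = true).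
Proof. unfold I2, indI. destruct (inIb _ _ _ _ (cl N g j)), (inIb _ _ _ _ (cl N g j + q N g)); 
  [right; repeat split; ring | left; ring | left; ring | left; ring]. Qed.

Lemma I2_nonneg N a b la lb g j : 0 <= I2 N a b la lb g j.
Proof. destruct (I2_01 N a b la lb g j) as [->|[-> _]]; lra. Qed.

Lemma X_le_approx N a b la lb g K : (16 <= N)%nat -> (S g <= K)%nat ->
  Xg N a b la lb g <= omega_approx N a b la lb K.
Proof.
  intros HN HK. unfold Xg, omega_approx.
  pose proof (regroup N (S g) (K - S g) (I2 N a b la lb (S g))) as R.
  replace (S g + (K - S g))%nat with K in R by lia. rewrite <- R.
  apply sumR_le. intros j Hj. pose proof (om_pos N K j HN).
  destruct (I2_01 N a b la lb (S g) (j / 2^(K - S g))) as [->|[-> [H1 H2]]].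
  - pose proof (indI_nonneg a b la lb (ccenter N K j)). nra.
  - assert (Hc : incyl N (S g) (j / 2^(K - S g)) (ccenter N K j)).
    { apply incyl_up; auto. replace (S g + (K - S g))%nat with K by lia. apply center_in; auto. }
    destruct Hc. unfold indI. rewrite (inIb_convex _ _ _ _ _ _ _ H1 H2); [lra|].
    split; auto.
Qed.

Lemma s_weight_eq N g j : s_weight N g j = (q N g)^2 / omega_cyl N g j.
Proof. unfold s_weight, q. replace (2*g)%nat with (g*2)%nat by lia. rewrite pow_mult.
  rewrite <- pow_inv. reflexivity. Qed.

Lemma level_zero N a b la lb k j0 g : (16 <= N)%nat -> minatom N a b la lb k j0 -> (g <= k)%nat ->
  sumR (2^g) (fun j => (s_weight N g j * indI a b la lb (ccenter N g j)) * (ccenter N g j - ccenter N k j0)^2) = 0.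
Proof.
  intros HN Hm Hg. apply sumR_zero. intros j Hj. unfold indI.
  destruct (inIb a b la lb (ccenter N g j)) eqn:E; [|ring].
  destruct (desc N a b la lb k j0 g j HN Hm Hj E) as [H1 H2].
  assert (g = k) by lia. subst g. rewrite Nat.sub_diag, Nat.pow_0_r, Nat.div_1_r in H2. subst j. ring.
Qed.

Lemma toward_child N a b la lb k j0 g j : (16 <= N)%nat -> minatom N a b la lb k j0 -> (k < g)%nat ->
  (j < 2^g)%nat -> inIb a b la lb (ccenter N g j) = true ->
  exists tc, (tc / 2 = j)%nat /\ I2 N a b la lb (S g) tc = 1 /\
     I2 N a b la lb (S g) tc * omega_cyl N (S g) tc <=
     I2 N a b la lb (S g) (2*j) * omega_cyl N (S g) (2*j) + I2 N a b la lb (S g) (2*j+1) * omega_cyl N (S g) (2*j+1).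
Proof.
  intros HN Hm Hkg Hj Hin.
  destruct (desc N a b la lb k j0 g j HN Hm Hj Hin) as [_ Hd].
  pose proof Hm as [Hj0 [Hin0 _]].
  set (p := (j / 2^(g - S k))%nat).
  assert (Hp : (p / 2 = j0)%nat).
  { unfold p. rewrite <- Hd. replace (g - k)%nat with ((g - S k) + 1)%nat by lia.
    rewrite div_pow_add. reflexivity. }
  pose proof (q_pos N g HN). pose proof (q_S_le N g HN). pose proof (q_pos N (S g) HN).
  pose proof (q_pos N k HN).
  assert (Hup : forall y, incyl N g j y -> incyl N (S k) p y).
  { intros y Hy. apply incyl_up; auto. replace (S k + (g - S k))%nat with g by lia. exact Hy. }
  assert (Hl := child_side N k p (cl N g j) HN (Hup (cl N g j) ltac:(unfold incyl; lra))).
  assert (Hr := child_side N k p (cl N g j + q N g) HN (Hup (cl N g j + q N g) ltac:(unfold incyl; lra))).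
  rewrite Hp in Hl, Hr.
  assert (Hc : ccenter N g j = cl N g j + q N g / 2) by reflexivity.
  destruct (Nat.odd p).
  - exists (2*j)%nat. split; [apply div2_2|].
    assert (E : I2 N a b la lb (S g) (2*j) = 1).
    { unfold I2, indI. rewrite cl_S, div2_2, Nat.odd_even, Rplus_0_r.
      rewrite (inIb_convex _ _ _ _ (ccenter N k j0) (ccenter N g j)); auto; [|lra].
      rewrite (inIb_convex _ _ _ _ (ccenter N k j0) (ccenter N g j)); auto; [ring|lra]. }
    split; auto. pose proof (I2_nonneg N a b la lb (S g) (2*j+1)).
    pose proof (om_pos N (S g) (2*j+1) HN). nra.
  - exists (2*j+1)%nat. split; [apply div2_2S|].
    assert (E : I2 N a b la lb (S g) (2*j+1) = 1).
    { unfold I2, indI. rewrite cl_S, div2_2S, Nat.odd_odd.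
      rewrite (inIb_convex _ _ _ _ (ccenter N g j) (ccenter N k j0)); auto; [|lra].
      rewrite (inIb_convex _ _ _ _ (ccenter N g j) (ccenter N k j0)); auto; [ring|lra]. }
    split; auto. pose proof (I2_nonneg N a b la lb (S g) (2*j)).
    pose proof (om_pos N (S g) (2*j) HN). nra.
Qed.

Lemma level_bound N a b la lb k j0 g : (16 <= N)%nat -> minatom N a b la lb k j0 -> (k < g)%nat ->
  sumR (2^g) (fun j => (s_weight N g j * indI a b la lb (ccenter N g j)) * (ccenter N g j - ccenter N k j0)^2)
  <= (b - a)^2 * (32/15) * ((32/15/INR N)^(g-k) * (q N k / omega_cyl N k j0))^2 * Xg N a b la lb g.
Proof.
  intros HN Hm Hkg. pose proof Hm as [Hj0 [Hin0 _]].
  set (Th := (32/15/INR N)^(g-k) * (q N k / omega_cyl N k j0)).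
  unfold Xg. rewrite Nat.pow_succ_r', sumR_pair, <- sumR_scal.
  apply sumR_le. intros j Hj.
  pose proof (om_pos N g j HN). pose proof (q_pos N g HN).
  assert (HR : 0 <= I2 N a b la lb (S g) (2*j) * omega_cyl N (S g) (2*j) +
                    I2 N a b la lb (S g) (2*j+1) * omega_cyl N (S g) (2*j+1)).
  { pose proof (I2_nonneg N a b la lb (S g) (2*j)). pose proof (I2_nonneg N a b la lb (S g) (2*j+1)).
    pose proof (om_pos N (S g) (2*j) HN). pose proof (om_pos N (S g) (2*j+1) HN). nra. }
  unfold indI. destruct (inIb a b la lb (ccenter N g j)) eqn:Ein.
  2:{ rewrite Rmult_0_r, Rmult_0_l. apply Rmult_le_pos; [|exact HR].
      apply Rmult_le_pos; [|apply pow2_ge_0]. apply Rmult_le_pos; [apply pow2_ge_0|lra]. }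
  destruct (desc N a b la lb k j0 g j HN Hm Hj Ein) as [_ Hd].
  destruct (toward_child N a b la lb k j0 g j HN Hm Hkg Hj Ein) as [tc [Htc [HI Hle]]].
  rewrite HI, Rmult_1_l in Hle.
  pose proof (om_child_ge N g tc HN) as Hch. rewrite Htc in Hch.
  pose proof (ratio_desc N k (g-k) j HN) as Hrat. replace (k + (g-k))%nat with g in Hrat by lia.
  rewrite Hd in Hrat. fold Th in Hrat.
  apply inIb_bounds in Ein. apply inIb_bounds in Hin0.
  assert (Hsq : (ccenter N g j - ccenter N k j0)^2 <= (b-a)^2) by nra.
  rewrite s_weight_eq, Rmult_1_r.
  assert (Hr0 : 0 <= q N g / omega_cyl N g j) by (apply Rmult_le_pos; [lra| left; apply Rinv_0_lt_compat; lra]).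
  assert (Hs : q N g ^ 2 / omega_cyl N g j = (q N g / omega_cyl N g j)^2 * omega_cyl N g j) by (field; lra).
  assert (Hs2 : (q N g / omega_cyl N g j)^2 <= Th^2) by (apply pow_incr; lra).
  assert (Hw : omega_cyl N g j <= 32/15 * omega_cyl N (S g) tc) by lra.
  assert (Hsb : q N g ^ 2 / omega_cyl N g j <= 32/15 * Th^2 * (I2 N a b la lb (S g) (2*j) * omega_cyl N (S g) (2*j) +
                    I2 N a b la lb (S g) (2*j+1) * omega_cyl N (S g) (2*j+1))).
  { rewrite Hs. apply Rle_trans with (Th^2 * (32/15 * omega_cyl N (S g) tc)).
    - apply Rmult_le_compat; try lra. apply pow2_ge_0.
    - nra. }
  assert (0 <= q N g ^ 2 / omega_cyl N g j) by (rewrite Hs; apply Rmult_le_pos; [apply pow2_ge_0|lra]).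
  apply Rle_trans with ((q N g ^ 2 / omega_cyl N g j) * (b-a)^2).
  - apply Rmult_le_compat_l; lra.
  - assert (0 <= (b-a)^2) by apply pow2_ge_0. nra.
Qed.

Lemma geom1 k M r K : 0 <= M -> 0 <= r <= 1/2 ->
  sumR K (fun g => if Nat.ltb k g then M * r^(g-k) else 0) <= 2*M*r.
Proof.
  intros HM Hr. set (b := fun g => if Nat.ltb k g then M * r^(g-k) else 0).
  assert (Z : forall K, (K <= S k)%nat -> sumR K b = 0).
  { intros K' HK. apply sumR_zero. intros g Hg. unfold b.
    destruct (Nat.ltb_spec k g); [lia|reflexivity]. }
  assert (T : forall d, sumR (S k + d) b + 2*M*r^(S d) <= 2*M*r).
  { induction d as [|d IH].
    - rewrite Nat.add_0_r, Z by lia. simpl. lra.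
    - rewrite Nat.add_succ_r. cbn [sumR]. unfold b at 2.
      destruct (Nat.ltb_spec k (S k + d)); [|lia].
      replace (S k + d - k)%nat with (S d) by lia.
      assert (0 <= M * r^(S d)) by (apply Rmult_le_pos; [lra| apply pow_le; lra]).
      change (r ^ S (S d)) with (r * r ^ (S d)). nra. }
  destruct (le_lt_dec K (S k)).
  - rewrite Z by auto. nra.
  - specialize (T (K - S k)%nat). replace (S k + (K - S k))%nat with K in T by lia.
    assert (0 <= M * r^(S (K - S k))) by (apply Rmult_le_pos; [lra| apply pow_le; lra]). lra.
Qed.

Definition S2 K (f : nat -> nat -> R) := sumR K (fun g => sumR (2^g) (fun j => f g j)).

Lemma S2_le K f h : (forall g j, (g < K)%nat -> (j < 2^g)%nat -> f g j <= h g j) -> S2 K f <= S2 K h.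
Proof. intros H. unfold S2. apply sumR_le. intros g Hg. apply sumR_le. intros j Hj. auto. Qed.
Lemma S2_plus K f h : S2 K (fun g j => f g j + h g j) = S2 K f + S2 K h.
Proof. unfold S2. rewrite <- sumR_plus. apply sumR_ext. intros. apply sumR_plus. Qed.
Lemma S2_scal K c f : S2 K (fun g j => c * f g j) = c * S2 K f.
Proof. unfold S2. rewrite <- sumR_scal. apply sumR_ext. intros. apply sumR_scal. Qed.
Lemma S2_ext K f h : (forall g j, f g j = h g j) -> S2 K f = S2 K h.
Proof. intros H. unfold S2. apply sumR_ext. intros. apply sumR_ext. auto. Qed.
Lemma S2_nonneg K f : (forall g j, 0 <= f g j) -> 0 <= S2 K f.
Proof. intros H. unfold S2. apply sumR_nonneg. intros. apply sumR_nonneg. auto. Qed.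

Lemma dbl_le N a b la lb K z : (16 <= N)%nat ->
  dbl_partial N a b la lb K <=
  4 * sigma_partial N a b la lb K *
  S2 K (fun g j => (s_weight N g j * indI a b la lb (ccenter N g j)) * (ccenter N g j - z)^2).
Proof.
  intros HN.
  set (A := fun g j => s_weight N g j * indI a b la lb (ccenter N g j)).
  set (U := fun g j => (ccenter N g j - z)^2).
  assert (HA : forall g j, 0 <= A g j).
  { intros g j. unfold A. rewrite s_weight_eq. apply Rmult_le_pos; [|apply indI_nonneg].
    pose proof (om_pos N g j HN). apply Rmult_le_pos; [apply pow2_ge_0| left; apply Rinv_0_lt_compat; lra]. }
  change (dbl_partial N a b la lb K) with
    (S2 K (fun g j => S2 K (fun g' j' => A g j * A g' j' * (ccenter N g j - ccenter N g' j')^2))).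
  change (sigma_partial N a b la lb K) with (S2 K A).
  change (S2 K (fun g j => A g j * (ccenter N g j - z)^2)) with (S2 K (fun g j => A g j * U g j)).
  apply Rle_trans with
    (S2 K (fun g j => (2 * (A g j * U g j)) * S2 K A + (2 * A g j) * S2 K (fun g' j' => A g' j' * U g' j'))).
  { apply S2_le. intros g j _ _. rewrite <- !S2_scal, <- S2_plus. apply S2_le. intros g' j' _ _.
    pose proof (HA g j). pose proof (HA g' j'). unfold U.
    assert ((ccenter N g j - ccenter N g' j')^2 <= 2 * (ccenter N g j - z)^2 + 2 * (ccenter N g' j' - z)^2).
    { pose proof (pow2_ge_0 (ccenter N g j + ccenter N g' j' - 2*z)). nra. }
    assert (0 <= A g j * A g' j') by nra.
    assert (A g j * A g' j' * (ccenter N g j - ccenter N g' j')^2 <= A g j * A g' j' * (2 * (ccenter N g j - z)^2 + 2 * (ccenter N g' j' - z)^2)) by (apply Rmult_le_compat_l; auto).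
    lra. }
  rewrite S2_plus.
  rewrite (S2_ext K (fun g j => 2 * (A g j * U g j) * S2 K A) (fun g j => (2 * S2 K A) * (A g j * U g j))) by (intros; ring).
  rewrite (S2_ext K (fun g j => 2 * A g j * S2 K (fun g' j' => A g' j' * U g' j'))
     (fun g j => (2 * S2 K (fun g' j' => A g' j' * U g' j')) * A g j)) by (intros; ring).
  rewrite !S2_scal. apply Req_le. change (S2 K (fun g j => s_weight N g j * indI a b la lb (ccenter N g j) * (ccenter N g j - z)^2)) with (S2 K (fun g j => A g j * U g j)). ring.
Qed.

Lemma om_nonneg N a b la lb om : (16 <= N)%nat -> Un_cv (omega_approx N a b la lb) om -> 0 <= om.
Proof. intros HN H. apply (lim_ge _ _ 0 0 H). intros n _. unfold omega_approx. apply sumR_nonneg.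
  intros j _. pose proof (om_pos N n j HN). pose proof (indI_nonneg a b la lb (ccenter N n j)). nra. Qed.

Lemma V_bound N a b la lb k j0 om K : (16 <= N)%nat -> a < b -> minatom N a b la lb k j0 ->
  Un_cv (omega_approx N a b la lb) om ->
  S2 K (fun g j => (s_weight N g j * indI a b la lb (ccenter N g j)) * (ccenter N g j - ccenter N k j0)^2)
  <= (b - a)^2 * (q N k / omega_cyl N k j0)^2 * om.
Proof.
  intros HN Hab Hm Hom. pose proof (HNR N HN).
  pose proof (om_nonneg N a b la lb om HN Hom) as Hom0.
  set (th := 32/15/INR N). set (u := q N k / omega_cyl N k j0).
  assert (Hth : 0 <= th <= 2/15).
  { unfold th. split. apply Rmult_le_pos; [lra| left; apply Rinv_0_lt_compat; lra].
    unfold Rdiv. apply Rle_trans with (32/15 * /16). apply Rmult_le_compat_l; [lra|].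
    apply Rinv_le_contravar; lra. lra. }
  set (M := (b-a)^2 * (32/15) * u^2 * om).
  assert (HM : 0 <= M).
  { unfold M. apply Rmult_le_pos; [|lra]. apply Rmult_le_pos; [|apply pow2_ge_0].
    apply Rmult_le_pos; [apply pow2_ge_0|lra]. }
  unfold S2. apply Rle_trans with (sumR K (fun g => if Nat.ltb k g then M * (th^2)^(g-k) else 0)).
  - apply sumR_le. intros g Hg. destruct (Nat.ltb_spec k g).
    + eapply Rle_trans; [apply (level_bound N a b la lb k j0 g HN Hm); auto|].
      fold th u.
      assert (HX : Xg N a b la lb g <= om).
      { apply (lim_ge _ _ _ (S g) Hom). intros n Hn. apply X_le_approx; auto. }
      assert (E : (th^(g-k) * u)^2 = (th^2)^(g-k) * u^2).
      { rewrite Rpow_mult_distr. rewrite <- !pow_mult. rewrite Nat.mul_comm. reflexivity. }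
      rewrite E. unfold M.
      assert (0 <= (b-a)^2 * (32/15) * ((th^2)^(g-k) * u^2)).
      { apply Rmult_le_pos. apply Rmult_le_pos; [apply pow2_ge_0|lra].
        apply Rmult_le_pos; apply pow_le; [apply pow2_ge_0| ]. unfold u.
        pose proof (q_pos N k HN). pose proof (om_pos N k j0 HN).
        apply Rmult_le_pos; [lra| left; apply Rinv_0_lt_compat; lra]. }
      apply Rle_trans with ((b-a)^2 * (32/15) * ((th^2)^(g-k) * u^2) * om).
      * apply Rmult_le_compat_l; auto.
      * right. ring.
    + rewrite level_zero; auto; lra.
  - eapply Rle_trans; [apply geom1; auto; split; [apply pow2_ge_0| nra]|].
    unfold M. assert (0 <= (b-a)^2 * u^2 * om).
    { apply Rmult_le_pos; [|lra]. apply Rmult_le_pos; apply pow2_ge_0. }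
    assert (th^2 <= 4/225) by nra. nra.
Qed.

Lemma lim_le_ev u l M n0 : Un_cv u l -> (forall n, (n >= n0)%nat -> u n <= M) -> l <= M.
Proof. intros Hu H. destruct (Rle_dec l M) as [|Hn]; auto. exfalso.
  destruct (Hu (l - M)) as [n1 Hn1]; [lra|]. specialize (Hn1 (max n0 n1) ltac:(lia)).
  specialize (H (max n0 n1) ltac:(lia)).
  unfold R_dist in Hn1. apply Rabs_def2 in Hn1. lra. Qed.

Theorem mainTheorem8 :
  forall N : nat, (16 <= N)%nat ->
  exists C : R,
  forall (a b : R) (la lb : bool),
    0 <= a -> a < b -> b <= 1 ->
  forall sig dbl om P : R,
    Un_cv (sigma_partial N a b la lb) sig ->
    Un_cv (dbl_partial N a b la lb) dbl ->
    Un_cv (omega_approx N a b la lb) om ->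
    Un_cv (poisson_approx N a b) P ->
    0 < sig ->
    sig * (/ 2 * (1 / sig ^ 2) * (dbl / (b - a) ^ 2)) * P ^ 2 <= C * om.
Proof.
  intros N HN. exists 128. intros a b la lb Ha Hab Hb sig dbl om P Hsig Hdbl Hom HP Hsigpos.
  pose proof (HNR N HN).
  pose proof (om_nonneg N a b la lb om HN Hom) as Hom0.
  assert (HL : 0 < (b - a)^2) by (apply pow_lt; lra).
  destruct (classic (exists g j, (j < 2^g)%nat /\ inIb a b la lb (ccenter N g j) = true)) as [Hex|Hno].
  2:{ assert (Hd0 : forall K, dbl_partial N a b la lb K = 0).
      { intros K. unfold dbl_partial. apply sumR_zero; intros g Hg. apply sumR_zero; intros j Hj.
        assert (E: indI a b la lb (ccenter N g j) = 0).
        { unfold indI. destruct (inIb a b la lb (ccenter N g j)) eqn:Ei; auto. exfalso; apply Hno; eauto. }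
        rewrite E. apply sumR_zero; intros. apply sumR_zero; intros. ring. }
      assert (dbl = 0).
      { apply Rle_antisym. apply (lim_le _ _ _ Hdbl). intros; rewrite Hd0; lra.
        apply (lim_ge _ _ _ 0 Hdbl). intros; rewrite Hd0; lra. }
      subst dbl. replace (0 / (b-a)^2) with 0 by (field; lra). nra. }
  destruct Hex as [g0 Hg0].
  destruct (least_nat (fun g => exists j, (j < 2^g)%nat /\ inIb a b la lb (ccenter N g j) = true) g0 Hg0)
    as [k [[j0 [Hj0 Hin0]] Hmin]].
  assert (Hm : minatom N a b la lb k j0).
  { split; auto. split; auto. intros g j Hg Hj.
    destruct (inIb a b la lb (ccenter N g j)) eqn:E; auto. exfalso. apply (Hmin g Hg). eauto. }
  pose proof (q_pos N k HN) as Hq. pose proof (om_pos N k j0 HN) as Hw.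
  set (u := q N k / omega_cyl N k j0).
  assert (Hu : 0 < u) by (unfold u; apply Rdiv_lt_0_compat; lra).
  assert (Hsnn : forall K, 0 <= sigma_partial N a b la lb K).
  { intros K. unfold sigma_partial. apply sumR_nonneg. intros g _. apply sumR_nonneg. intros j _.
    rewrite s_weight_eq. pose proof (om_pos N g j HN). apply Rmult_le_pos; [|apply indI_nonneg].
    apply Rmult_le_pos; [apply pow2_ge_0| left; apply Rinv_0_lt_compat; lra]. }
  assert (Hsg : forall K, sigma_partial N a b la lb K <= sig).
  { apply growing_ineq; auto. intros n. unfold sigma_partial. cbn [sumR].
    assert (0 <= sumR (2 ^ n) (fun j => s_weight N n j * indI a b la lb (ccenter N n j))); [|lra].
    apply sumR_nonneg. intros j _.
    rewrite s_weight_eq. pose proof (om_pos N n j HN). apply Rmult_le_pos; [|apply indI_nonneg].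
    apply Rmult_le_pos; [apply pow2_ge_0| left; apply Rinv_0_lt_compat; lra]. }
  assert (Hdb : dbl <= 4 * sig * ((b - a)^2 * u^2 * om)).
  { apply (lim_le _ _ _ Hdbl). intros K.
    eapply Rle_trans; [apply (dbl_le N a b la lb K (ccenter N k j0) HN)|].
    pose proof (V_bound N a b la lb k j0 om K HN Hab Hm Hom) as HV. fold u in HV.
    set (V := S2 K _) in *.
    assert (0 <= V).
    { unfold V. apply S2_nonneg. intros g j. apply Rmult_le_pos; [|apply pow2_ge_0].
      rewrite s_weight_eq. pose proof (om_pos N g j HN). apply Rmult_le_pos; [|apply indI_nonneg].
      apply Rmult_le_pos; [apply pow2_ge_0| left; apply Rinv_0_lt_compat; lra]. }
    specialize (Hsnn K). specialize (Hsg K).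
    apply Rmult_le_compat; nra. }
  assert (HPb : P <= 8 * INR N ^ k * omega_cyl N k j0).
  { apply (lim_le_ev _ _ _ (S k) HP). intros n Hn. apply (pois_bound N a b la lb k j0 n); auto. }
  assert (HP0 : 0 <= P).
  { apply (lim_ge _ _ 0 0 HP). intros n _. unfold poisson_approx. apply sumR_nonneg. intros j _.
    pose proof (om_pos N n j HN). apply Rmult_le_pos; [lra|].
    pose proof (Rmax_r (Rmax (a - ccenter N n j) (ccenter N n j - b)) 0).
    unfold distI. apply Rmult_le_pos; [lra| left; apply Rinv_0_lt_compat; apply pow_lt; lra]. }
  assert (HuP : u * P <= 8).
  { pose proof (q_pow N k HN).
    apply Rle_trans with (u * (8 * INR N ^ k * omega_cyl N k j0)).
    - apply Rmult_le_compat_l; lra.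
    - right. unfold u. replace (q N k / omega_cyl N k j0 * (8 * INR N ^ k * omega_cyl N k j0)) with (8 * (INR N ^ k * q N k)) by (field; lra). rewrite H0. ring. }
  replace (sig * (/ 2 * (1 / sig ^ 2) * (dbl / (b - a) ^ 2)) * P ^ 2)
    with ((dbl / (sig * (b - a)^2)) * P^2 / 2) by (field; lra).
  assert (Hq1 : dbl / (sig * (b-a)^2) <= 4 * u^2 * om).
  { apply Rmult_le_reg_r with (sig * (b-a)^2); [nra|].
    replace (dbl / (sig * (b - a) ^ 2) * (sig * (b - a) ^ 2)) with dbl by (field; lra). nra. }
  assert (0 <= u * P) by nra.
  assert ((u*P)^2 <= 64) by nra.
  apply Rle_trans with (4 * u^2 * om * P^2 / 2).
  - unfold Rdiv. apply Rmult_le_compat_r; [lra|]. apply Rmult_le_compat_r; [apply pow2_ge_0|lra].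
  - replace (4 * u^2 * om * P^2 / 2) with (2 * om * (u*P)^2) by (field). nra.
Qed.
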